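(* Let $X\ge e^{120}$, $U=\log X$ and $\widetilde W_X=[X,(1+\tfrac{2}{U})X]$. Fix any trajectory $(y_j)_{j\ge0}$ of the map $\mathcal{M}$, and let $N$ be the number of indices $j$ such that $y_j\in\widetilde W_X$ and $y_j$ is composite. Then $N\le 4$.
   Context: Let $\pi(m)$ be the number of primes $\le m$. The integer map $\mathcal{M}$ is defined by: for composite $m$, $\mathcal{M}(m)=m+\pi(m)$ (forward step of length $\pi(m)$); for a prime $p\ge 3$, $\mathcal{M}(p)=p^-$, the largest prime less than $p$ (i.e. the prime steps backward by its preceding prime gap). A trajectory is a sequence with $y_{j+1}=\mathcal{M}(y_j)$ for all $j\ge0$. *)

(* Defs.v *)
From mathcomp Require Import all_boot.
From Stdlib Require Import Reals.

Set Implicit Arguments. Unset Strict Implicit. Unset Printing Implicit Defensive.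

Definition primepi (m : nat) : nat := count prime (iota 0 m.+1).

Definition composite (m : nat) : bool := (1 < m) && ~~ prime m.

Definition is_prev_prime (p q : nat) : Prop :=
  prime q /\ (q < p)%N /\ (forall r, (q < r)%N -> (r < p)%N -> ~~ prime r).

Definition Mstep (m m' : nat) : Prop :=
  (composite m /\ m' = (m + primepi m)%N) \/
  (prime m /\ (3 <= m)%N /\ is_prev_prime m m').

Definition trajectory (y : nat -> nat) : Prop := forall j, Mstep (y j) (y j.+1).

Definition in_window (X : R) (n : nat) : Prop :=
  (X <= INR n <= (1 + 2 / ln X) * X)%R.

(* Main.v *)
Require Import Defs.
From mathcomp Require Import all_boot.
From Stdlib Require Import Reals.
From mathcomp Require Import zify.
From Stdlib Require Import Lra.
Local Notation "m ^ n" := (expn m n) : nat_scope.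

Lemma binrec n : n.+1 * 'C(n.*2.+2, n.+1) = 2 * (n.*2.+1) * 'C(n.*2, n).
Proof.
have h1 := mul_bin_diag n.*2.+2 n.
have h2 := mul_bin_diag n.*2.+1 n.
have h3 : 'C(n.*2.+1, n.+1) = 'C(n.*2.+1, n).
  rewrite -(bin_sub (n:=n.*2.+1) (m:=n)); last by lia.
  have -> : n.*2.+1 - n = n.+1 by lia.
  by [].
simpl in h1, h2. rewrite h3 in h2. nia.
Qed.

Lemma central_lb n : 4 ^ n <= n.*2.+1 * 'C(n.*2, n).
Proof.
elim: n => [|n IH]; first by rewrite bin0.
have h := binrec n.
have e : (n.+1).*2 = n.*2.+2 by lia.
rewrite e expnS.
have : (n.+1) * (4 * 4 ^ n) <= (n.+1) * (n.*2.+3 * 'C(n.*2.+2, n.+1)); last first.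
  by rewrite leq_pmul2l.
nia.
Qed.
Lemma sum_ext_zero (n p : nat) : prime p ->
  \sum_(1 <= k < n.+1) n %/ p ^ k = \sum_(1 <= k < n.*2.+1) n %/ p ^ k.
Proof.
move=> pp.
rewrite [RHS](big_cat_nat (n:=n.+1)) /=; [|by []|lia].
rewrite [X in _ + X]big1_seq ?addn0 // => k /andP[_].
rewrite mem_index_iota => /andP[hk _].
apply/divn_small.
apply: (leq_trans hk); apply: ltnW; apply: ltn_expl; exact: prime_gt1.
Qed.

Lemma div2_le n q : 0 < q -> n.*2 %/ q <= 2 * (n %/ q) + (q <= n.*2).
Proof.
move=> q0.
case: (leqP q n.*2) => h.
- rewrite /= addn1 -ltnS; have h2 : n.*2 %/ q < (2 * (n %/ q)).+2.
    rewrite ltn_divLR //.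
    have := ltn_pmod n q0; have := divn_eq n q. nia.
  by [].
- by rewrite divn_small.
Qed.

Lemma sum_bound p n t M : 1 < p -> (forall k, p ^ k <= n.*2 -> k <= t) ->
  \sum_(1 <= k < M.+1) n.*2 %/ p ^ k <= 2 * \sum_(1 <= k < M.+1) n %/ p ^ k + minn M t.
Proof.
move=> p1 ht; elim: M => [|M IH]; first by rewrite !big_geq.
rewrite (big_nat_recr M.+1) // (big_nat_recr M.+1) //=.
have hq : 0 < p ^ M.+1 by rewrite expn_gt0; lia.
have := @div2_le n _ hq.
case: (leqP (p ^ M.+1) n.*2) => h.
- have := ht _ h; rewrite /=; lia.
- rewrite /=; lia.
Qed.

Lemma logn_central p n : prime p -> logn p 'C(n.*2, n) <= trunc_log p n.*2.
Proof.
move=> pp.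
have p1 := prime_gt1 pp.
have hf := bin_fact (leq_addl n n : n <= n + n).
rewrite -addnn in hf *.
have hsub : n + n - n = n by lia.
rewrite hsub in hf.
have hl : logn p (n + n)`! = logn p 'C(n+n, n) + (logn p n`! + logn p n`!).
  rewrite -hf lognM ?lognM ?muln_gt0 ?fact_gt0 //.
  by rewrite bin_gt0 leq_addl.
rewrite !logn_fact // in hl.
rewrite addnn in hl; rewrite (@sum_ext_zero n p pp) in hl.
have hb := @sum_bound p n (trunc_log p n.*2) n.*2 p1
  (fun k hk => trunc_log_max p1 hk).
rewrite addnn. move: hl hb. set A := \sum_(1 <= k < n.*2.+1) n.*2 %/ p ^ k. set B := \sum_(1 <= k < n.*2.+1) n %/ p ^ k. clearbody A B. lia.
Qed.
Lemma prod_le_pow (s : seq nat) (f : nat -> nat) c :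
  (forall x, x \in s -> f x <= c) -> \prod_(x <- s) f x <= c ^ size s.
Proof.
elim: s => [|a s IH] h; first by rewrite big_nil.
rewrite big_cons /= expnS; apply: leq_mul.
  by apply: h; rewrite inE eqxx.
by apply: IH => x hx; apply: h; rewrite inE hx orbT.
Qed.

Lemma central_ub n : 0 < n -> 'C(n.*2, n) <= n.*2 ^ primepi n.*2.
Proof.
move=> n0.
set B := 'C(n.*2, n).
have B0 : 0 < B by rewrite /B bin_gt0 -addnn leq_addl.
have n20 : 0 < n.*2 by lia.
have hpk : forall p, p \in primes B -> p ^ logn p B <= n.*2.
  move=> p; rewrite mem_primes => /andP[pp _].
  apply: leq_trans (trunc_logP (prime_gt1 pp) n20).
  by rewrite leq_exp2l ?prime_gt1 //; apply: logn_central.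
rewrite {1}(prod_prime_decomp B0) prime_decompE big_map /=.
apply: leq_trans (@prod_le_pow _ (fun p => p ^ logn p B) _ hpk) _.
rewrite leq_exp2l; last by lia.
rewrite /primepi -size_filter.
apply: uniq_leq_size; first exact: primes_uniq.
move=> p hp; rewrite mem_filter.
have pp : prime p by move: hp; rewrite mem_primes => /andP[].
rewrite pp /= inE mem_iota; apply/orP; right; apply/andP; split; first by apply: prime_gt0.
rewrite add1n ltnS.
apply: leq_trans (hpk p hp).
have : 0 < logn p B by rewrite logn_gt0.
case: (logn p B) => // k _. rewrite expnS. 
have : 0 < p ^ k by rewrite expn_gt0 prime_gt0.
nia.
Qed.
Section RealPart.
Local Open Scope R_scope.
Lemma ln_le_xm1 x : 0 < x -> ln x <= x - 1.
Proof. move=> hx; have := exp_ineq1_le (ln x); rewrite exp_ln //; lra. Qed.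

Lemma ln_le_mono x y : 0 < x -> x <= y -> ln x <= ln y.
Proof.
move=> hx hxy; case: (Rle_lt_or_eq_dec _ _ hxy) => h.
- by apply: Rlt_le; apply: ln_increasing.
- by rewrite h; apply: Rle_refl.
Qed.

Lemma ln2_ge : 3/5 <= ln 2.
Proof.
have e3 : exp 3 = exp 1 * exp 1 * exp 1.
  by rewrite -!exp_plus; congr exp; lra.
have h1 := exp_le_3. have h0 := exp_pos 1.
have h27 : exp 3 <= 27.
  rewrite e3.
  have : exp 1 * exp 1 <= 9 by nra. nra.
have : ln (exp 3) < ln (2 ^ 5).
  apply: ln_increasing; first exact: exp_pos. simpl; lra.
rewrite ln_exp ln_pow; last lra. simpl. lra.
Qed.

Lemma exp120 : 3721 <= exp 120.
Proof.
have -> : 120 = 60 + 60 by lra.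
rewrite exp_plus. have := exp_ineq1_le 60. nra.
Qed.

Lemma real_contra (X P n2 : R) : exp 120 <= X -> 0 <= P -> 0 < n2 <= X -> X < n2 + 2 ->
  n2 * ln 2 <= ln (n2 + 1) + P * ln n2 -> 4 * P * ln X <= 2 * X -> False.
Proof.
move=> hX hP [hn0 hnX] hXn hmain hwin.
have h3721 := exp120.
have l2 := ln2_ge.
have hlnn : ln n2 <= ln X by apply: ln_le_mono.
have hPl : P * ln n2 <= P * ln X by apply: Rmult_le_compat_l.
have hn1 : ln (n2 + 1) <= ln (X + 1) by apply: ln_le_mono; lra.
have hX1 : ln (X + 1) = ln ((X + 1) / 100) + ln 100.
  rewrite -ln_mult; [congr ln; field | |]; lra.
have hA := ln_le_xm1 ((X + 1) / 100) ltac:(lra).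
have hB := ln_le_xm1 100 ltac:(lra).
have hc : n2 * (3/5) <= n2 * ln 2 by apply: Rmult_le_compat_l; lra.
lra.
Qed.
End RealPart.

Lemma primepi_mono m m' : m <= m' -> primepi m <= primepi m'.
Proof.
move=> h; rewrite /primepi.
have -> : m'.+1 = m.+1 + (m' - m) by lia.
by rewrite iotaD count_cat leq_addr.
Qed.

Lemma traj_prime_desc y j : trajectory y -> prime (y j) ->
  forall k, prime (y (j + k)) && (y (j + k) + k <= y j).
Proof.
move=> ht hp; elim=> [|k /andP[pk hk]]; first by rewrite addn0 hp addn0 leqnn.
have := ht (j + k); case=> [[hc _]|[_ [_ [pq [lt _]]]]].
  by move: hc; rewrite /composite pk andbF.
rewrite addnS pq /=. lia.
Qed.

Lemma traj_comp y j : trajectory y -> composite (y j).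
Proof.
move=> ht; have := ht j; case=> [[hc _]//|[hp _]].
have := @traj_prime_desc y j ht hp (y j).+1 => /andP[_]; lia.
Qed.

Lemma traj_step y j : trajectory y -> y j.+1 = y j + primepi (y j).
Proof.
move=> ht; have := ht j; case=> [[_ ->]//|[hp _]].
by have := @traj_comp y j ht; rewrite /composite hp andbF.
Qed.

Lemma traj_growth y a : trajectory y ->
  forall k, y a + k * primepi (y a) <= y (a + k).
Proof.
move=> ht; elim=> [|k IH]; first by rewrite addn0 mul0n addn0.
rewrite addnS (@traj_step y _ ht).
have : primepi (y a) <= primepi (y (a + k)).
  apply: primepi_mono; lia.
lia.
Qed.

Lemma seq_min (s : seq nat) : s != [::] -> exists2 a, a \in s & forall j, j \in s -> a <= j.
Proof.
elim: s => [//|x s IH] _.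
case: (altP (s =P [::])) => [->|hs].
  by exists x; rewrite ?inE // => j; rewrite inE => /eqP ->.
have [a ha hmin] := IH hs.
exists (minn x a).
  by rewrite /minn; case: ifP => _; rewrite inE ?eqxx ?ha ?orbT.
move=> j; rewrite inE => /orP[/eqP ->|hj]; first by rewrite geq_minl.
by apply: leq_trans (geq_minr _ _) (hmin _ hj).
Qed.

Lemma seq_max (s : seq nat) : s != [::] -> exists2 b, b \in s & forall j, j \in s -> j <= b.
Proof.
elim: s => [//|x s IH] _.
case: (altP (s =P [::])) => [->|hs].
  by exists x; rewrite ?inE // => j; rewrite inE => /eqP ->.
have [a ha hmax] := IH hs.
exists (maxn x a).
  by rewrite /maxn; case: ifP => _; rewrite inE ?eqxx ?ha ?orbT.
move=> j; rewrite inE => /orP[/eqP ->|hj]; first by rewrite leq_maxl.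
by apply: leq_trans (hmax _ hj) (leq_maxr _ _).
Qed.

Lemma spread (s : seq nat) : uniq s -> 5 <= size s ->
  exists a b, [/\ a \in s, b \in s & a + 4 <= b].
Proof.
move=> us h5.
have ne : s != [::] by case: s h5 us.
have [a ha hmin] := @seq_min s ne.
have [b hb hmax] := @seq_max s ne.
exists a, b; split => //.
have : size s <= size (iota a (b - a).+1).
  apply: uniq_leq_size => // j hj; rewrite mem_iota.
  have := hmin _ hj; have := hmax _ hj; lia.
rewrite size_iota. have := hmin _ hb. lia.
Qed.

Lemma expn_pow a b : expn a b = Nat.pow a b.
Proof. elim: b => [//|b IH]; by rewrite expnS IH /= mulnE. Qed.

Lemma chebyshev_real n : 0 < n ->
  (INR n.*2 * ln 2 <= ln (INR n.*2 + 1) + INR (primepi n.*2) * ln (INR n.*2))%R.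
Proof.
move=> n0.
have h := leq_trans (central_lb n) (leq_mul (leqnn n.*2.+1) (@central_ub n n0)).
have hr : (INR (4 ^ n) <= INR (n.*2.+1 * n.*2 ^ primepi n.*2))%R.
  by apply: le_INR; apply/leP.
rewrite mult_INR !expn_pow !pow_INR in hr.
have pos2 : (0 < INR n.*2)%R by apply: lt_0_INR; apply/ltP; lia.
have H4 : (0 < INR 4)%R by apply: lt_0_INR; apply/ltP.
have hl := @ln_le_mono _ _ (pow_lt (INR 4) n H4) hr.
rewrite ln_mult in hl; last first.
- by apply: pow_lt.
- by have := pos_INR n.*2; rewrite S_INR; lra.
rewrite (ln_pow _ H4) (ln_pow _ pos2) in hl.
have e4 : ln (INR 4) = (2 * ln 2)%R.
  have -> : INR 4 = (2 * 2)%R by rewrite !S_INR INR_IZR_INZ /=; lra.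
  rewrite ln_mult; lra.
have e2 : INR n.*2 = (2 * INR n)%R by rewrite -addnn plus_INR; lra.
have e1 : INR n.*2.+1 = (2 * INR n + 1)%R by rewrite S_INR e2.
rewrite e4 e1 in hl. rewrite e2 in hl *. lra.
Qed.

Theorem lemma3p3 (X : R) (y : nat -> nat) :
  (exp 120 <= X)%R ->
  trajectory y ->
  forall s : seq nat, uniq s ->
    (forall j, j \in s -> composite (y j) /\ in_window X (y j)) ->
    (size s <= 4)%N.
Proof.
move=> hX ht s us hs.
rewrite leqNgt; apply/negP => h5.
have [a [b [ha hb hab]]] := @spread s us h5.
have [_ [hXa _]] := hs a ha.
have [_ [_ hbX]] := hs b hb.
have h3721 := exp120.
have [hz1 hz2] := base_Int_part (X / 2).
set z := Int_part (X / 2) in hz1 hz2 *.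
have z0 : (0 <= z)%Z.
  have : (-1 < z)%Z.
    apply: lt_IZR. lra.
  lia.
set n := Z.to_nat z.
have hn : INR n = IZR z by rewrite INR_IZR_INZ /n Znat.Z2Nat.id.
have e2 : INR n.*2 = (2 * INR n)%R by rewrite -addnn plus_INR; lra.
have n0 : 0 < n by apply/ltP; apply: INR_lt; rewrite hn /=; lra.
have hna : n.*2 <= y a.
  apply/leP; apply: INR_le; rewrite e2 hn -/z; lra.
set P := primepi n.*2.
have hPa : P <= primepi (y a) by apply: primepi_mono.
have hg := @traj_growth y a ht (b - a).
have hb' : a + (b - a) = b by lia.
rewrite hb' in hg.
have h4P : 4 * P + y a <= y b by nia.
have r4P : (4 * INR P + INR (y a) <= INR (y b))%R.
  have := le_INR _ _ (elimT leP h4P).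
  rewrite plus_INR mult_INR => h.
  have e : INR 4 = 4%R by rewrite !S_INR INR_IZR_INZ /=; lra.
  by rewrite e in h.
have Upos : (0 < ln X)%R.
  rewrite -ln_1; apply: ln_increasing; lra.
have hw : (4 * INR P * ln X <= 2 * X)%R.
  have : (4 * INR P <= 2 * X / ln X)%R.
    have : ((1 + 2 / ln X) * X = X + 2 * X / ln X)%R by field; lra.
    lra.
  move=> h; have := Rmult_le_compat_r (ln X) _ _ (Rlt_le _ _ Upos) h.
  have -> : (2 * X / ln X * ln X = 2 * X)%R by field; lra.
  by [].
apply: (@real_contra X (INR P) (INR n.*2) hX).
- exact: pos_INR.
- split; first by rewrite e2; lra.
  rewrite e2 hn -/z; lra.
- rewrite e2 hn -/z; lra.
- exact: chebyshev_real.
- exact: hw.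
Qed.
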